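(* There is an absolute constant $C>0$ such that for every prime power $q$, every positive integer $n$, and every alternating matrix space $\mathcal{A}\le\Lambda(n,\mathbb{F}_q)$, the number of maximal isotropic spaces of $\mathcal{A}$ is at most $q^{\frac{1}{6}n^2+Cn}$.
   Context: $\Lambda(n,\mathbb{F}_q)$ is the space of $n\times n$ alternating matrices over $\mathbb{F}_q$ (matrices $A$ with $v^tAv=0$ for all $v$). A subspace $U\le\mathbb{F}_q^n$ is an isotropic space of $\mathcal{A}$ if $u^tAu'=0$ for all $u,u'\in U$, $A\in\mathcal{A}$; it is maximal if no isotropic space of $\mathcal{A}$ properly contains it. *)

(* Defs.v *)
From HB Require Import structures.
From mathcomp Require Import all_boot all_order all_algebra all_field.
From Stdlib Require Import Reals.
Set Implicit Arguments. Unset Strict Implicit. Unset Printing Implicit Defensive.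
Import GRing.Theory.
Local Open Scope ring_scope.

Definition alternating (F : fieldType) (n : nat) (M : 'M[F]_n) : Prop :=
  forall v : 'cV[F]_n, v^T *m M *m v = 0.

Definition alt_space (F : fieldType) (n : nat) (A : {vspace 'M[F]_n}) : Prop :=
  forall M : 'M[F]_n, M \in A -> alternating M.

Definition isotropic (F : fieldType) (n : nat) (A : {vspace 'M[F]_n})
    (U : {vspace 'cV[F]_n}) : Prop :=
  forall u u' : 'cV[F]_n, u \in U -> u' \in U ->
  forall M : 'M[F]_n, M \in A -> u^T *m M *m u' = 0.

Definition max_isotropic (F : fieldType) (n : nat) (A : {vspace 'M[F]_n})
    (U : {vspace 'cV[F]_n}) : Prop :=
  isotropic A U /\
  forall U' : {vspace 'cV[F]_n}, isotropic A U' -> (U <= U')%VS -> U' = U.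

(* Main.v *)
Require Import Defs.
From HB Require Import structures.
From mathcomp Require Import all_boot all_order all_algebra all_field.
From mathcomp Require Import zify.
From Stdlib Require Import Reals Lra.
Set Implicit Arguments. Unset Strict Implicit. Unset Printing Implicit Defensive.
Import GRing.Theory.
Local Open Scope ring_scope.

Section S.
Variables (F : finFieldType) (n : nat) (A : {vspace 'M[F]_n}).
Hypothesis hA : alt_space A.
Implicit Types (l : seq 'cV[F]_n) (x y v w u z : 'cV[F]_n) (U W Z : {vspace 'cV[F]_n}).

Definition ortho x y : bool :=
  [forall M : 'M[F]_n, (M \in A) ==> (x^T *m M *m y == 0)].

Lemma orthoP x y : reflect (forall M, M \in A -> x^T *m M *m y = 0) (ortho x y).
Proof.
apply: (iffP forallP) => [H M hM | H M]; first by apply/eqP; exact: (implyP (H M)).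
by apply/implyP => hM; rewrite H.
Qed.

Lemma skew M x y : M \in A -> x^T *m M *m y = - (y^T *m M *m x).
Proof.
move=> hM; have := hA hM (x + y).
rewrite !linearD /= !mulmxDl (hA hM x) (hA hM y) add0r addr0.
by rewrite addrC => /eqP; rewrite addr_eq0 => /eqP.
Qed.

Lemma ortho_sym x y : ortho x y = ortho y x.
Proof.
apply/orthoP/orthoP => H M hM; by rewrite skew // H // oppr0.
Qed.

Lemma ortho0l y : ortho 0 y.
Proof. by apply/orthoP => M _; rewrite linear0 !mul0mx. Qed.

Lemma orthoDl x1 x2 y : ortho x1 y -> ortho x2 y -> ortho (x1 + x2) y.
Proof.
move=> /orthoP h1 /orthoP h2; apply/orthoP => M hM.
by rewrite linearD /= !mulmxDl h1 // h2 // addr0.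
Qed.

Lemma orthoZl a x y : ortho x y -> ortho (a *: x) y.
Proof.
move=> /orthoP h; apply/orthoP => M hM.
by rewrite linearZ /= -!scalemxAl h // scaler0.
Qed.

Lemma ortho_self x : ortho x x.
Proof. by apply/orthoP => M hM; apply: hA. Qed.

Lemma orthoDr x y1 y2 : ortho x y1 -> ortho x y2 -> ortho x (y1 + y2).
Proof. rewrite !(ortho_sym x); exact: orthoDl. Qed.

Lemma orthoZr a x y : ortho x y -> ortho x (a *: y).
Proof. rewrite !(ortho_sym x); exact: orthoZl. Qed.

Lemma ortho0r x : ortho x 0.
Proof. by rewrite ortho_sym ortho0l. Qed.

Definition spanP (P : pred 'cV[F]_n) : {vspace 'cV[F]_n} :=
  <<[seq w <- enum 'cV[F]_n | P w]>>%VS.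

Lemma mem_spanP (P : pred 'cV[F]_n) :
  P 0 -> (forall x y, P x -> P y -> P (x + y)) -> (forall a x, P x -> P (a *: x)) ->
  forall w, (w \in spanP P) = P w.
Proof.
move=> P0 PD PZ w; apply/idP/idP => [hw | Pw]; last first.
  by apply: memv_span; rewrite mem_filter Pw mem_enum.
rewrite /spanP in hw; set s := [seq _ <- _ | _] in hw.
have := coord_span (X := in_tuple s) hw => ->.
apply: (big_ind P) => // i _; apply: PZ.
have : (in_tuple s)`_i \in s by apply: mem_nth; exact: ltn_ord.
by rewrite mem_filter => /andP[].
Qed.

Definition perpv v := spanP (ortho v).

Lemma mem_perpv v w : (w \in perpv v) = ortho v w.
Proof.
apply: mem_spanP; [exact: ortho0r | exact: orthoDr | move=> a y; exact: orthoZr].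
Qed.


Definition radZ W Z := (Z <= W)%VS /\ (forall z w, z \in Z -> w \in W -> ortho z w).
Definition maxin W Z U :=
  [/\ (Z <= U)%VS, (U <= W)%VS, (forall u u', u \in U -> u' \in U -> ortho u u')
    & (forall w, w \in W -> (forall u, u \in U -> ortho u w) -> w \in U)].

Lemma orthoDl_eq x z w : ortho z w -> ortho (x + z) w = ortho x w.
Proof.
move=> hz; apply/idP/idP => h; last exact: orthoDl.
have -> : x = (x + z) + (-1) *: z by rewrite scaleN1r addrK.
by apply: orthoDl => //; apply: orthoZl.
Qed.

Lemma step_rad W Z v : radZ W Z -> v \in W -> radZ (W :&: perpv v) (Z + <[v]>).
Proof.
move=> [sZW rZ] vW; split.
  rewrite subv_add !subv_cap sZW -!memvE vW mem_perpv ortho_self /= andbT.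
  by apply/subvP => z zZ; rewrite mem_perpv ortho_sym rZ.
move=> x w /memv_addP[z zZ [y /vlineP[a ->] ->]] /memv_capP[wW].
rewrite mem_perpv => hv; apply: orthoDl; first exact: rZ.
exact: orthoZl.
Qed.

Lemma step_max W Z U v : maxin W Z U -> v \in U -> maxin (W :&: perpv v) (Z + <[v]>) U.
Proof.
move=> [sZU sUW iso mx] vU; split => //.
- by rewrite subv_add sZU -memvE.
- rewrite subv_cap sUW; apply/subvP => u uU; rewrite mem_perpv; exact: iso.
- by move=> w /memv_capP[wW _]; apply: mx.
Qed.

Lemma dim_addline Z v : v \notin Z -> \dim (Z + <[v]>) = (\dim Z).+1.
Proof.
move=> vZ; have v0 : v != 0 by apply: contraNneq vZ => ->; rewrite mem0v.
rewrite dimv_disjoint_sum ?dim_vline ?v0 ?addn1 //.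
apply/vspaceP => x; rewrite memv_cap memv0; apply/andP/eqP => [[xZ /vlineP[a xa]]|->].
  have [a0|a0] := eqVneq a 0; first by rewrite xa a0 scale0r.
  case/negP: vZ; have -> : v = a^-1 *: x by rewrite xa scalerA mulVf // scale1r.
  exact: rpredZ.
by rewrite !mem0v.
Qed.


Definition foldP W (l : seq 'cV[F]_n) :=
  foldr (fun b X => X :&: (W :&: perpv b))%VS W l.

Lemma mem_foldP W l w : (w \in foldP W l) = (w \in W) && all (fun b => ortho b w) l.
Proof.
elim: l => [|b l IH] /=; first by rewrite andbT.
by rewrite !memv_cap IH mem_perpv; case: (w \in W); case: (ortho b w); case: all.
Qed.

Lemma foldP_sub W l : (foldP W l <= W)%VS.
Proof. by apply/subvP => w; rewrite mem_foldP => /andP[]. Qed.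

Lemma foldP_dim W l : (forall b, b \in l -> (\dim W <= (\dim (W :&: perpv b)).+1)%nat) ->
  (\dim W <= \dim (foldP W l) + size l)%nat.
Proof.
elim: l => [|b l IH] hl /=; first by rewrite addn0.
have IH' := IH (fun c cl => hl c (mem_behead (s := b :: l) cl)).
have hb := hl b (mem_head _ _).
set X := foldP W l in IH' *; set Y := (W :&: perpv b)%VS.
have := dimv_sum_cap X Y.
have : (\dim (X + Y) <= \dim W)%nat.
  by apply: dimvS; rewrite subv_add foldP_sub capvSl.
rewrite /Y; lia.
Qed.

Lemma codim W Z U : radZ W Z -> maxin W Z U ->
  (forall v, v \in U -> (\dim W <= (\dim (W :&: perpv v)).+1)%nat) ->
  (\dim W + \dim Z <= 2 * \dim U)%nat.
Proof.
move=> [sZW rZ] [sZU sUW iso mx] hU.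
set C := (U :\: Z)%VS.
have hC : (\dim C + \dim Z = \dim U)%nat.
  by rewrite addnC -(dimv_cap_compl U Z) (capv_idPr sZU).
set bs := vbasis C.
have spC : <<bs>>%VS = C by have /andP[/eqP -> _] := vbasisP C.
have bsU : forall b, b \in (bs : seq _) -> b \in U.
  move=> b bb; have : b \in C by rewrite -spC memv_span.
  by rewrite /C => /(subvP (diffvSl U Z)).
have hd := foldP_dim (l := bs) (fun b bb => hU b (bsU b bb)).
have sPU : (foldP W bs <= U)%VS.
  apply/subvP => w; rewrite mem_foldP => /andP[wW /allP hall].
  apply: mx => // u; rewrite -(addv_diff_cap U Z) => /memv_addP[c cC [z zZ ->]].
  apply: orthoDl; last by apply: rZ => //; exact: (subvP (capvSr U Z)).
  have : (<<bs>> <= perpv w)%VS.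
    by apply/span_subvP => b bb; rewrite mem_perpv ortho_sym; apply: hall.
  rewrite spC => /subvP /(_ c cC); rewrite mem_perpv ortho_sym //.
have := dimvS sPU; rewrite size_tuple in hd; lia.
Qed.


Lemma card_sum (Q : pred 'cV[F]_n) : #|[pred v | Q v]| = (\sum_v (Q v : nat))%nat.
Proof.
rewrite -sum1_card big_mkcond /=; apply: eq_bigr => v _; rewrite inE; by case: (Q v).
Qed.

Lemma dcount (T : seq {vspace 'cV[F]_n}) (P : pred 'cV[F]_n) (k b : nat) W :
  (forall U, U \in T -> (U <= W)%VS) ->
  (forall U, U \in T -> (k <= #|[pred v | (v \in U) && P v]|)%nat) ->
  (forall v, v \in W -> P v -> (count (fun U => v \in U) T <= b)%nat) ->
  (size T * k <= #|W| * b)%nat.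
Proof.
move=> hW hk hb.
have -> : (size T * k = \sum_(U <- T) k)%nat.
  by rewrite big_const_seq count_predT iter_addn_0 mulnC.
apply: (@leq_trans (\sum_(U <- T) #|[pred v | (v \in U) && P v]|)).
  by rewrite big_seq [X in (_ <= X)%nat]big_seq; apply: leq_sum => U UT; apply: hk.
under eq_bigr do rewrite card_sum.
rewrite exchange_big /=.
have -> : (#|W| * b = \sum_v ((v \in W) : nat) * b)%nat.
  by rewrite -big_distrl /= -card_sum.
apply: leq_sum => v _.
case Pv : (P v); last by rewrite big1 // => U _; rewrite andbF.
have -> : (\sum_(U <- T) ((v \in U) && true : nat) = count (fun U => v \in U) T)%nat.
  by rewrite -sum1_count [RHS]big_mkcond; apply: eq_bigr => U _; rewrite andbT; case: (v \in U).
case vW : (v \in W); first by rewrite mul1n hb.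
rewrite mul0n leqn0 -[_ == 0%nat]negbK -lt0n -has_count; apply/hasP => -[U UT vU].
by move: vW; rewrite (subvP (hW U UT)).
Qed.


Definition ee (m : nat) := ((m * m + 12 * m) %/ 6)%nat.
Lemma ee_mono m1 m2 : (m1 <= m2)%nat -> (ee m1 <= ee m2)%nat.
Proof. rewrite /ee => h; apply: leq_div2r; apply: leq_add; [exact: leq_mul | exact: leq_mul]. Qed.
Lemma ee_A m mm : (1 <= mm)%nat -> (mm <= m)%nat -> (mm + ee (m - 3) + 1 <= ee m)%nat.
Proof. rewrite /ee => h1 h2. nia. Qed.
Lemma ee_C m mm : (1 <= mm)%nat -> (mm <= m)%nat ->
  (mm - (mm + 1) %/ 2 + 1 + ee (m - 2) + 1 <= ee m)%nat.
Proof. rewrite /ee => h1 h2. nia. Qed.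

Definition rk W v := (\dim W - \dim (W :&: perpv v))%nat.

Lemma rk_rad W Z v z : radZ W Z -> z \in Z -> rk W (v + z) = rk W v.
Proof.
move=> [sZW rZ] zZ; rewrite /rk; congr (_ - \dim _)%nat; apply/vspaceP => w.
rewrite !memv_cap !mem_perpv; case wW: (w \in W) => //=.
by rewrite orthoDl_eq //; apply: rZ.
Qed.

Lemma rk_Z W Z v : radZ W Z -> v \in Z -> rk W v = 0%nat.
Proof.
move=> [sZW rZ] vZ; rewrite /rk; suff -> : (W :&: perpv v)%VS = W by rewrite subnn.
apply/capv_idPl/subvP => w wW; rewrite mem_perpv; exact: rZ.
Qed.


Lemma step_IH m (IH : forall k, (k < m)%nat -> forall W Z, radZ W Z -> (\dim W - \dim Z <= k)%nat ->
     forall s, uniq s -> (forall U, U \in s -> maxin W Z U) -> (size s <= expn #|F| (ee k))%nat)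
  W Z (s : seq {vspace 'cV[F]_n}) v k :
  (k < m)%nat -> radZ W Z -> v \in W -> v \notin Z ->
  (\dim (W :&: perpv v) - (\dim Z).+1 <= k)%nat -> uniq s -> (forall U, U \in s -> maxin W Z U) ->
  (count (fun U => v \in U) s <= expn #|F| (ee k))%nat.
Proof.
move=> km hWZ vW vZ hd us hs; rewrite -size_filter.
apply: (IH k km (W :&: perpv v)%VS (Z + <[v]>)%VS).
- exact: step_rad.
- by rewrite dim_addline.
- exact: filter_uniq.
- by move=> U; rewrite mem_filter => /andP[vU Us]; apply: step_max => //; apply: hs.
Qed.

Lemma main m : forall W Z, radZ W Z -> (\dim W - \dim Z <= m)%nat ->
  forall s, uniq s -> (forall U, U \in s -> maxin W Z U) -> (size s <= expn #|F| (ee m))%nat.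
Proof.
elim/ltn_ind: m => m IH W Z hWZ hm s us hs.
have q2 : (1 < #|F|)%nat := card_finNzRing_gt1 F.
have q0 : (0 < #|F|)%nat by lia.
have [sZW rZ] := hWZ.
have dZW := dimvS sZW.
set mm := (\dim W - \dim Z)%nat in hm.
have emm : mm = (\dim W - \dim Z)%nat by [].
clearbody mm.
case: (posnP mm) => [mm0 | mmpos].
  have eZW : Z = W by apply/eqP; rewrite eqEdim sZW /=; lia.
  have hsub : {subset s <= [:: W]}.
    move=> U Us; have [sZU sUW _ _] := hs U Us; rewrite inE; apply/eqP.
    by apply: subv_anti; rewrite sUW -eZW.
  have := uniq_leq_size us hsub => /= h; apply: leq_trans h _; by rewrite expn_gt0 q0.
case: (boolP [exists v, [&& v \in W, v \notin Z & [forall w, (w \in W) ==> ortho v w]]]).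
  case/existsP => v /and3P[vW vZ /forallP rv].
  have vs : forall U, U \in s -> v \in U.
    move=> U Us; have [_ sUW _ mx] := hs U Us; apply: mx => // u uU.
    by rewrite ortho_sym; apply: (implyP (rv u)); apply: (subvP sUW).
  have dW' := dimvS (capvSl W (perpv v)).
  apply: (@leq_trans (expn #|F| (ee m.-1))); last by apply: leq_pexp2l => //; apply: ee_mono; lia.
  have -> : size s = count (fun U => v \in U) s.
    by apply/esym/eqP; rewrite -all_count; apply/allP => U Us; apply: vs.
  apply: (@step_IH m IH W Z s v m.-1) => //; lia.
move=> nrad.
have hnr : forall v, v \in W -> v \notin Z -> (\dim (W :&: perpv v) < \dim W)%nat.
  move=> v vW vZ; rewrite ltnNge; apply/negP => hd; case/existsP: nrad; exists v.
  rewrite vW vZ /=; apply/forallP => w; apply/implyP => wW.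
  have : (W :&: perpv v)%VS == W by rewrite eqEdim capvSl.
  by move/eqP => e; move: wW; rewrite -{1}e memv_cap mem_perpv => /andP[].
pose pA U := [exists v, (v \in U) && (1 < rk W v)%nat].
set T := filter pA s; set T' := filter (predC pA) s.
have hsize : size s = (size T + size T')%nat by rewrite !size_filter count_predC.
have Ts : forall U, U \in T -> U \in s by move=> U; rewrite mem_filter => /andP[].
have T's : forall U, U \in T' -> U \in s by move=> U; rewrite mem_filter => /andP[].
have cW : #|W| = (expn #|F| (\dim Z) * expn #|F| mm)%nat.
  rewrite card_vspace -expnD; apply: congr1; have e : \dim W = (\dim Z + mm)%nat by lia.
  exact: e.
have hT : (size T * expn #|F| (\dim Z) <= #|W| * expn #|F| (ee (m - 3)))%nat.
  apply: (dcount (P := fun v => 1 < rk W v)%nat).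
  - by move=> U UT; have [_ ? _ _] := hs U (Ts U UT).
  - move=> U UT; have := UT; rewrite mem_filter => /andP[/existsP[v0 /andP[v0U rv0]] _].
    have [sZU _ _ _] := hs U (Ts U UT).
    rewrite -card_vspace -(card_imset _ (addrI v0)); apply: subset_leq_card.
    apply/subsetP => x /imsetP[z zZ ->]; rewrite inE /=.
    by rewrite rpredD //= ?(subvP sZU) // (rk_rad _ hWZ zZ).
  - move=> v vW rv; have vZ : v \notin Z by apply/negP => vZ; move: rv; rewrite (rk_Z hWZ vZ).
    apply: (@step_IH m IH W Z T v (m - 3)) => //.
    - lia.
    - have := dimvS (capvSl W (perpv v)); move: rv; rewrite /rk; lia.
    - exact: filter_uniq.
    - by move=> U UT; apply: hs; apply: Ts.
have hT2 : (size T <= expn #|F| (mm + ee (m - 3)))%nat.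
  rewrite expnD -(@leq_pmul2r (expn #|F| (\dim Z))) ?expn_gt0 ?q0 //.
  apply: (leq_trans hT); rewrite cW; apply: eq_leq; nia.
set c := ((mm + 1) %/ 2)%nat.
have hT' : (size T' * expn #|F| (\dim Z + c - 1) <= #|W| * expn #|F| (ee (m - 2)))%nat.
  apply: (dcount (P := fun v => v \notin Z)).
  - by move=> U UT; have [_ ? _ _] := hs U (T's U UT).
  - move=> U UT; have := UT; rewrite mem_filter => /andP[/= nA _].
    have hmU := hs U (T's U UT); have [sZU sUW _ _] := hmU.
    have hr : forall v, v \in U -> (\dim W <= (\dim (W :&: perpv v)).+1)%nat.
      move=> v vU; have : ~~ (1 < rk W v)%nat.
        by apply/negP => h; case/existsP: nA; exists v; rewrite vU h.
      have := dimvS (capvSl W (perpv v)); rewrite /rk; lia.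
    have cd := codim hWZ hmU hr.
    have dU := dimvS sZU.
    have cU : #|U| = (#|[pred v | (v \in U) && (v \notin Z)]| + #|Z|)%nat.
      rewrite -(cardID Z U) addnC; apply: f_equal2; apply: eq_card => x; rewrite !inE.
      by rewrite andbC.
      by case xZ: (x \in Z); rewrite ?andbT ?andbF ?(subvP sZU).
    have : (expn #|F| (\dim Z + c - 1) + #|Z| <= #|U|)%nat.
      rewrite !card_vspace.
      have e1 : \dim U = (\dim U - 1).+1 by lia.
      rewrite e1 expnS.
      have h1 : (expn #|F| (\dim Z + c - 1) <= expn #|F| (\dim U - 1))%nat by apply: leq_pexp2l => //; lia.
      have h2 : (expn #|F| (\dim Z) <= expn #|F| (\dim U - 1))%nat by apply: leq_pexp2l => //; lia.
      have h3 : (2 * expn #|F| (\dim U - 1) <= #|F| * expn #|F| (\dim U - 1))%nat by apply: leq_mul.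
      apply: leq_trans (leq_add h1 h2) _; rewrite addnn -mul2n; exact: h3.
    by rewrite cU leq_add2r.
  - move=> v vW vZ; apply: (@step_IH m IH W Z T' v (m - 2)) => //.
    - lia.
    - have := hnr v vW vZ; lia.
    - exact: filter_uniq.
    - by move=> U UT; apply: hs; apply: T's.
have hT'2 : (size T' <= expn #|F| (mm - c + 1 + ee (m - 2)))%nat.
  have cW' : #|W| = (expn #|F| (\dim Z + c - 1) * expn #|F| (mm - c + 1))%nat.
    rewrite card_vspace -expnD; apply: congr1.
    have e : \dim W = (\dim Z + c - 1 + (mm - c + 1))%nat by rewrite /c; lia.
    exact: e.
  rewrite expnD -(@leq_pmul2r (expn #|F| (\dim Z + c - 1))) ?expn_gt0 ?q0 //.
  apply: (leq_trans hT'); rewrite cW'; apply: eq_leq; nia.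
have eA := ee_A mmpos hm; have eC := ee_C mmpos hm.
have h1 : (expn #|F| (mm + ee (m - 3)) <= expn #|F| (ee m).-1)%nat by apply: leq_pexp2l => //; lia.
have h2 : (expn #|F| (mm - c + 1 + ee (m - 2)) <= expn #|F| (ee m).-1)%nat by apply: leq_pexp2l => //; rewrite /c; lia.
have e1 : ee m = (ee m).-1.+1 by lia.
have h3 : (2 * expn #|F| (ee m).-1 <= #|F| * expn #|F| (ee m).-1)%nat by apply: leq_mul.
rewrite hsize e1 expnS; lia.
Qed.

End S.

Lemma expn_pow (a b : nat) : expn a b = Nat.pow a b.
Proof. elim: b => [|b IH] //=; by rewrite expnS IH mulnE. Qed.

Local Close Scope ring_scope.

Theorem theorem1p10 :
  exists C : R, Rlt 0 C /\
  forall (F : finFieldType) (n : nat), (0 < n)%N ->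
  forall A : {vspace 'M[F]_n}, alt_space A ->
  forall s : seq {vspace 'cV[F]_n}, uniq s ->
    (forall U, U \in s -> max_isotropic A U) ->
    Rle (INR (size s))
        (Rpower (INR #|F|) (Rplus (Rdiv (pow (INR n) 2) (INR 6)) (Rmult C (INR n)))).
Proof.
exists 2%R; split; first lra.
move=> F n n0 A hA s us hs.
have key : (size s <= expn #|F| (ee n))%nat.
  apply: (main hA (W := fullv) (Z := 0%VS)) => //.
  - split; first exact: sub0v.
    by move=> z w; rewrite memv0 => /eqP -> _; apply: ortho0l.
  - by rewrite dimvf dim_matrix dimv0 GRing.mulr1 subn0.
  - move=> U Us; have [hiso hmax] := hs U Us; split.
    + exact: sub0v.
    + exact: subvf.
    + by move=> u u' uU u'U; apply/orthoP => M hM; apply: hiso.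
    + move=> w _ hw.
      have iso' : isotropic A (U + <[w]>)%VS.
        move=> x y /memv_addP[u1 u1U [x2 /vlineP[a ->] ->]].
        move=> /memv_addP[u2 u2U [y2 /vlineP[b ->] ->]] M hM.
        move: M hM; apply/orthoP.
        apply: orthoDl; apply: (orthoDr hA).
        * by apply/orthoP => M' hM'; apply: hiso.
        * by apply: (orthoZr hA); apply: hw.
        * by apply: orthoZl; rewrite (ortho_sym hA); apply: hw.
        * by apply: orthoZl; apply: (orthoZr hA); apply: (ortho_self hA).
      have e := hmax _ iso' (addvSl U <[w]>).
      by rewrite -e; apply: (subvP (addvSr U <[w]>)); apply: memv_line.
have q2 : (1 < #|F|)%nat := card_finNzRing_gt1 F.
have hq : (1 <= INR #|F|)%R by apply: (le_INR 1); apply/leP; lia.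
have h6 : (6 * ee n <= n * n + 12 * n)%coq_nat by apply/leP; rewrite /ee; lia.
have h6' := le_INR _ _ h6.
rewrite mult_INR plus_INR !mult_INR in h6'.
apply: (Rle_trans _ (INR (expn #|F| (ee n)))); first by apply: le_INR; apply/leP.
rewrite expn_pow pow_INR -Rpower_pow; last lra.
apply: Rle_Rpower => //.
have -> : INR 6 = 6%R by simpl; lra.
have e12 : INR 12 = 12%R by simpl; lra.
have e6 : INR 6 = 6%R by simpl; lra.
rewrite e6 e12 in h6'. nra.
Qed.
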